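(* Let $Z=(X_1,\dots,X_M)$ be a random vector (full data), $[M]=\{X_1,\dots,X_M\}$, and let $R$ be a random variable taking values in a finite collection $Q$ of nonempty subsets of $[M]$ with $\pi_r=\mathbb{P}(R=r)$ for $r\in Q$. Assume (MCAR) $R$ is independent of $Z$, and (positivity) $[M]\in Q$ with $\pi_{[M]}>c>0$. For $s\subseteq[M]$ let $\lambda_s=\sum_{r\in Q,\ s\subseteq r}\pi_r$, and for $r\in Q$, $r\neq[M]$, define $$\omega_r=\sum_{s:\ r\subseteq s\subseteq[M]}(-1)^{|s|-|r|}\frac{\mathbb{I}(R\supseteq s)}{\lambda_s}.$$ Let $\psi^F:\mathcal{Z}\times\Omega\to\mathbb{R}^d$ and $\theta^\star\in\Omega$ satisfy $\mathbb{E}[\psi^F(Z,\theta^\star)]=\mathbf{0}_d$ with $\mathbb{E}[\psi^F(Z,\theta)^T\psi^F(Z,\theta)]<\infty$. For each $r\in Q$, $r\neq[M]$, let $\mathcal{F}_r$ be a fixed (non-random, e.g. pre-trained) measurable $\mathbb{R}^d$-valued function of $X_r$ with $\mathbb{E}\|\mathcal{F}_r(X_r)\|<\infty$, serving as a proxy either for $\mathbb{E}[\psi^F(Z,\theta^\star)\mid X_r]$ or for $\psi^F(\mathbb{E}[Z\mid X_r],\theta^\star)$. Then for every choice of real numbers $\alpha=\{\alpha_r: r\in Q, r\neq[M]\}$, the function $$\psi_\alpha(Z;\theta^\star)=\frac{\mathbb{I}(R=[M])}{\pi_{[M]}}\psi^F(Z,\theta^\star)+\sum_{r\in Q,\ r\neq[M]}\alpha_r\,\omega_r\,\mathcal{F}_r(X_r)$$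 satisfies $\mathbb{E}[\psi_\alpha(Z;\theta^\star)]=\mathbf{0}_d$, the expectation being over the joint distribution of $(Z,R)$.
   Context: $X_r$ denotes the sub-vector of $Z$ consisting of the modalities in $r$; $\mathbb{I}(\cdot)$ is the indicator function; $|s|$ is the cardinality of $s$. $\Omega\subset\mathbb{R}^d$ is the parameter space and $\mathcal{Z}$ the sample space of $Z$. *)

(* Defs.v *)
From HB Require Import structures.
From mathcomp Require Import all_boot all_order all_algebra.
From mathcomp Require Import all_classical all_reals all_analysis.
Set Implicit Arguments. Unset Strict Implicit. Unset Printing Implicit Defensive.
Import Order.TTheory GRing.Theory Num.Theory.
Local Open Scope ring_scope.

Definition fullM (M : nat) : {set 'I_M} := finset.setT.

Section MissingData.
Context {dT : measure_display} {T : measurableType dT} {R : realType}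
        (P : probability T R) {M : nat} (Rv : T -> {set 'I_M}).

Definition pi_ (r : {set 'I_M}) : R := fine (P [set t | Rv t = r]%classic).

Definition lambda_ (Q : {set {set 'I_M}}) (s : {set 'I_M}) : R :=
  \sum_(r in Q | s \subset r) pi_ r.

Definition omega_ (Q : {set {set 'I_M}}) (r : {set 'I_M}) (t : T) : R :=
  \sum_(s : {set 'I_M} | r \subset s)
     (-1) ^+ (#|s| - #|r|)%N * (s \subset Rv t)%:R / lambda_ Q s.

Definition psi_alpha {Zs : Type} {d : nat} (Q : {set {set 'I_M}})
  (Z : T -> Zs) (psiF : Zs -> 'rV[R]_d -> 'rV[R]_d) (theta : 'rV[R]_d)
  (F : {set 'I_M} -> Zs -> 'rV[R]_d) (alpha : {set 'I_M} -> R) (t : T)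
  : 'rV[R]_d :=
  ((Rv t == fullM M)%:R / pi_ (fullM M)) *: psiF (Z t) theta
  + \sum_(r in Q | r != fullM M) (alpha r * omega_ Q r t) *: F r (Z t).

End MissingData.

(* Main.v *)
Require Import Defs.
From HB Require Import structures.
From mathcomp Require Import all_boot all_order all_algebra.
From mathcomp Require Import all_classical all_reals all_analysis.
Import Order.TTheory GRing.Theory Num.Theory.
Local Open Scope classical_set_scope.
Local Open Scope ring_scope.
From mathcomp Require Import measurable_realfun simple_functions.
From mathcomp Require Import ring lra.
Import HBNNSimple.

Section LR.
Local Open Scope ereal_scope.
Context d (T : measurableType d) (R : realType).
Variables (m : {measure set T -> \bar R}) (D : set T) (mD : measurable D).

Let LR_indic E : measurable E ->
  \int[mrestr m mD]_x (\1_E x)%:E = \int[m]_(x in D) (\1_E x)%:E.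
Proof. by move=> mE; rewrite !integral_indic// /mrestr setIT. Qed.

Let LR_nnsfun (h : {nnsfun T >-> R}) :
  \int[mrestr m mD]_x (h x)%:E = \int[m]_(x in D) (h x)%:E.
Proof.
under [LHS]eq_integral do rewrite fimfunE -fsumEFin//.
rewrite [LHS]ge0_integral_fsum//; last 2 first.
  - by move=> r; exact/measurable_EFinP/measurableT_comp.
  - by move=> n x _; rewrite EFinM nnfun_muleindic_ge0.
under [RHS]eq_integral do rewrite fimfunE -fsumEFin//.
rewrite [RHS]ge0_integral_fsum//; last 2 first.
  - by move=> r; exact/measurable_EFinP/measurableT_comp.
  - by move=> n x _; rewrite EFinM nnfun_muleindic_ge0.
apply: eq_fsbigr => r _.
by rewrite !integralZl_indic_nnsfun//= LR_indic.
Qed.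

Lemma integral_mrestr (f : T -> \bar R) (mf : measurable_fun setT f) :
    (forall x, 0 <= f x) ->
  \int[mrestr m mD]_x f x = \int[m]_(x in D) f x.
Proof.
move=> f0; pose f_ := nnsfun_approx measurableT mf.
transitivity (limn (fun n => \int[mrestr m mD]_x (f_ n x)%:E)).
  rewrite -monotone_convergence//=.
  - apply: eq_integral => x /[!inE] xD; apply/esym/cvg_lim => //=.
    exact: cvg_nnsfun_approx.
  - by move=> n; apply: measurableT_comp => //.
  - by move=> n x _; rewrite lee_fin.
  - by move=> x _ a b ab; rewrite lee_fin//; exact/lefP/nd_nnsfun_approx.
rewrite (_ : \int[m]_(x in D) _ =
    limn (fun n => \int[m]_(x in D) (f_ n x)%:E)); last first.
  rewrite -monotone_convergence//=.
  - apply: eq_integral => x /[!inE] xD; apply/esym/cvg_lim => //.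
    exact: cvg_nnsfun_approx.
  - by move=> n; exact/measurable_EFinP/measurable_funTS.
  - by move=> n x _; rewrite lee_fin.
  - by move=> x _ a b ab; rewrite lee_fin//; exact/lefP/nd_nnsfun_approx.
by congr (limn _); apply/funext => n /=; rewrite LR_nnsfun.
Qed.
End LR.
Section L0.
Local Open Scope ereal_scope.
Context d (T : measurableType d) (R : realType) dZ (Zs : measurableType dZ).
Variables (P : probability T R) (Z : T -> Zs) (mZ : measurable_fun setT Z).
Variables (A : set T) (mA : measurable A).
Hypothesis indep : forall B, measurable B -> P (A `&` Z @^-1` B) = P A * P (Z @^-1` B).
Let PAE : P A = (fine (P A))%:E.
Proof. by rewrite fineK// fin_num_measure. Qed.
Let PA0 : (0 <= fine (P A))%R.
Proof. by rewrite fine_ge0. Qed.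
Let k : {nonneg R} := NngNum PA0.

Lemma L0 (f : Zs -> \bar R) : measurable_fun setT f -> (forall z, 0 <= f z) ->
  \int[P]_(x in A) f (Z x) = P A * \int[P]_x f (Z x).
Proof.
move=> mf f0.
have mfZ : measurable_fun setT (f \o Z) by exact: measurableT_comp.
have f0Z : forall x, 0 <= (f \o Z) x by move=> x; exact: f0.
rewrite -(@integral_mrestr _ _ _ P _ mA _ mfZ f0Z).
have -> : \int[mrestr P mA]_x f (Z x) = \int[pushforward (mrestr P mA) Z]_y f y.
  by rewrite ge0_integral_pushforward// preimage_setT.
rewrite (eq_measure_integral (pushforward (mscale k P) Z)); last first.
  move=> B mB _.
  change (P (Z @^-1` B `&` A) = (fine (P A))%:E * P (Z @^-1` B)).
  by rewrite setIC indep// -PAE.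
rewrite ge0_integral_pushforward// preimage_setT ge0_integral_mscale//=.
by rewrite -PAE.
Qed.

Lemma L1 (g : Zs -> R) : measurable_fun setT g ->
  P.-integrable setT (fun x => (g (Z x))%:E) ->
  \int[P]_x (((x \in A)%:R * g (Z x))%:E) = P A * \int[P]_x (g (Z x))%:E.
Proof.
move=> mg ig.
have mEg : measurable_fun setT (EFin \o g) by exact/measurable_EFinP.
rewrite integralE [X in _ = _ * X]integralE.
have -> : \int[P]_x (fun x => (((x \in A)%:R * g (Z x))%:E))^\+ x
        = \int[P]_(x in A) (EFin \o g)^\+ (Z x).
  rewrite [RHS]integral_mkcond; apply: eq_integral => x _.
  rewrite /patch !funeposE /=; case: ifPn => xA; first by rewrite mul1r.
  by rewrite mul0r maxxx.
have -> : \int[P]_x (fun x => (((x \in A)%:R * g (Z x))%:E))^\- x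
        = \int[P]_(x in A) (EFin \o g)^\- (Z x).
  rewrite [RHS]integral_mkcond; apply: eq_integral => x _.
  rewrite /patch !funenegE /=; case: ifPn => xA; first by rewrite mul1r.
  by rewrite mul0r /= oppr0 maxxx.
rewrite L0; last 2 first.
- exact: measurable_funepos.
- by move=> z; exact: funepos_ge0.
rewrite L0; last 2 first.
- exact: measurable_funeneg.
- by move=> z; exact: funeneg_ge0.
rewrite [RHS]muleBr ?fin_num_measure//.
  congr (_ * _ - _ * _); apply: eq_integral => x _.
    by rewrite !funeposE.
  by rewrite !funenegE.
apply: fin_num_adde_defl; rewrite fin_numN.
exact: (integrable_neg_fin_num measurableT ig).
Qed.
End L0.
Lemma alt_sum (R : numFieldType) (M : nat) (r : {set 'I_M}) : r != (finset.setT : {set 'I_M}) ->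
  \sum_(s : {set 'I_M} | r \subset s) (-1) ^+ (#|s| - #|r|)%N = 0 :> R.
Proof.
rewrite -properT => /properP[_ [i _ ir]].
pose tog (s : {set 'I_M}) := if i \in s then s :\ i else i |: s.
have togK : involutive tog.
  move=> s; rewrite /tog; have [iS|iS] := boolP (i \in s).
    by rewrite setD11 finset.setD1K.
  by rewrite setU11 finset.setU1K.
have subE s : (r \subset tog s) = (r \subset s).
  rewrite /tog; case: ifPn => iS; first by rewrite subsetD1 ir andbT.
  apply/idP/idP => rs; last first.
    by apply: (fintype.subset_trans rs); apply/fintype.subsetP => x; rewrite !inE => ->; rewrite orbT.
  apply/fintype.subsetP => x xr; have := fintype.subsetP rs x xr; rewrite !inE.
  by case/orP => // /eqP xi; move: ir; rewrite -xi xr.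
set S := (X in X = _).
have : S = - S.
  rewrite {1}/S (reindex_inj (can_inj togK)) /= -sumrN.
  apply: eq_big; first by move=> s; rewrite subE.
  move=> s; rewrite subE => rs; rewrite /tog; case: ifPn => iS.
    have := cardsD1 i s; rewrite iS add1n => cs.
    have rs2 : r \subset s :\ i by rewrite subsetD1 rs ir.
    by rewrite cs subSn ?subset_leq_card // exprS mulN1r opprK.
  have := cardsU1 i s; rewrite iS add1n => ->.
  by rewrite subSn ?subset_leq_card // exprS mulN1r.
move/eqP; rewrite -subr_eq0 opprK -mulr2n mulrn_eq0 /= => /eqP //.
Qed.

Section L2.
Context d (T : measurableType d) (R : realType) dZ (Zs : measurableType dZ).
Variables (P : probability T R) (Z : T -> Zs) (mZ : measurable_fun setT Z).
Variables (M : nat) (Rv : T -> {set 'I_M}).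
Hypothesis mR : forall r, measurable [set t | Rv t = r].
Hypothesis indep : forall r B, measurable B ->
  P ([set t | Rv t = r] `&` Z @^-1` B) = (P [set t | Rv t = r] * P (Z @^-1` B))%E.

Lemma indR (p : pred {set 'I_M}) x :
  (p (Rv x))%:R = \sum_(r | p r) (x \in [set t | Rv t = r])%:R :> R.
Proof.
have E r : (x \in [set t | Rv t = r])%:R = (Rv x == r)%:R :> R.
  by case: eqP => h; [rewrite mem_set|rewrite memNset].
under eq_bigr do rewrite E.
have [pR|pR] := boolP (p (Rv x)).
  rewrite (bigD1 (Rv x)) //= eqxx big1 ?addr0 // => r /andP[_ /negbTE].
  by rewrite eq_sym => ->.
rewrite big1 // => r pr; case: eqP => // h; by move: pR; rewrite h pr.
Qed.

Lemma int_ind (r : {set 'I_M}) (g : Zs -> R) : measurable_fun setT g ->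
  P.-integrable setT (fun x => (g (Z x))%:E) ->
  P.-integrable setT (fun x => ((x \in [set t | Rv t = r])%:R * g (Z x))%:E).
Proof.
move=> mg ig; apply: (le_integrable _ _ _ ig) => //.
  apply/measurable_EFinP; apply: measurable_funM.
    by apply: measurable_indic; exact: mR.
  exact: measurableT_comp.
move=> x _; rewrite !abse_EFin lee_fin normrM ler_piMl //.
by case: (_ \in _); rewrite ?normr1 ?normr0.
Qed.

Lemma int_p (p : pred {set 'I_M}) (g : Zs -> R) : measurable_fun setT g ->
  P.-integrable setT (fun x => (g (Z x))%:E) ->
  P.-integrable setT (fun x => ((p (Rv x))%:R * g (Z x))%:E).
Proof.
move=> mg ig.
have h : P.-integrable setT (fun x => \sum_(r | p r) ((x \in [set t | Rv t = r])%:R * g (Z x))%:E).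
  by apply: (@integrable_sum _ _ _ P setT measurableT) => r _; exact: int_ind.
apply: (@eq_integrable _ _ _ P setT measurableT _ _ _ h) => x _.
by rewrite indR big_distrl /= sumEFin.
Qed.

Lemma L2 (p : pred {set 'I_M}) (g : Zs -> R) : measurable_fun setT g ->
  P.-integrable setT (fun x => (g (Z x))%:E) ->
  (\int[P]_x ((p (Rv x))%:R * g (Z x))%:E =
  (\sum_(r | p r) fine (P [set t | Rv t = r]))%:E * \int[P]_x (g (Z x))%:E)%E.
Proof.
move=> mg ig.
under eq_integral do rewrite indR big_distrl /= -sumEFin.
rewrite integral_sum //; last by move=> r; exact: int_ind.
have fI := integrable_fin_num measurableT ig.
transitivity (\sum_(r | p r) ((fine (P [set t | Rv t = r]))%:E * \int[P]_x (g (Z x))%:E)%E).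
  apply: eq_bigr => r _; rewrite (@L1 _ _ _ _ _ P Z mZ _ (mR r)) //; last exact: indep.
  by rewrite fineK // fin_num_measure.
rewrite -(fineK fI); under eq_bigr do rewrite -EFinM.
by rewrite sumEFin -big_distrl.
Qed.
End L2.

Local Open Scope ring_scope.
Lemma absle1 (R : realType) (a S : R) : a ^+ 2 <= S -> `|a| <= `|1 + S|.
Proof.
move=> aS; have S0 : 0 <= S by apply: le_trans aS; exact: sqr_ge0.
rewrite [`|1 + S|]ger0_norm ?addr_ge0 //.
have h : `|a| ^+ 2 = a ^+ 2 by rewrite real_normK ?num_real.
have := normr_ge0 a; have := sqr_ge0 (`|a| - 1); move: aS; rewrite -h; move: (`|a|) => b bS B2 b0.
have e : (b - 1) ^+ 2 = b ^+ 2 - 2 * b + 1 by ring.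
rewrite e in B2.
lra.
Qed.
Lemma absle2 (R : realType) (a S : R) : a ^+ 2 <= S -> `|a| <= `|Num.sqrt S|.
Proof.
move=> aS; rewrite [`|Num.sqrt S|]ger0_norm ?sqrtr_ge0 // -sqrtr_sqr.
exact: ler_wsqrtr.
Qed.

Theorem proposition2
  (dT : measure_display) (T : measurableType dT) (R : realType)
  (P : probability T R)
  (M d : nat)
  (* sample space of the full data Z = (X_1,...,X_M), with modality maps *)
  (dZ : measure_display) (Zs : measurableType dZ)
  (V : Type) (coord : 'I_M -> Zs -> V)
  (Z : T -> Zs)
  (* missingness pattern R with values in Q *)
  (Rv : T -> {set 'I_M}) (Q : {set {set 'I_M}})
  (c : R)
  (Omega : set 'rV[R]_d) (psiF : Zs -> 'rV[R]_d -> 'rV[R]_d)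
  (theta_star : 'rV[R]_d)
  (F : {set 'I_M} -> Zs -> 'rV[R]_d)
  (alpha : {set 'I_M} -> R) :
  measurable_fun setT Z ->
  (forall r, measurable [set t | Rv t = r]) ->
  (forall t, Rv t \in Q) ->
  (forall r, r \in Q -> r != finset.set0) ->
  (* MCAR: R independent of Z *)
  (forall (r : {set 'I_M}) (B : set Zs), measurable B ->
     P ([set t | Rv t = r] `&` Z @^-1` B)
     = (P [set t | Rv t = r] * P (Z @^-1` B))%E) ->
  (* positivity *)
  fullM M \in Q -> 0 < c -> c < pi_ P Rv (fullM M) ->
  (* estimating equation *)
  Omega theta_star ->
  (forall theta, Omega theta -> forall j : 'I_d,
     measurable_fun setT (fun z => psiF z theta ord0 j)) ->
  (forall theta, Omega theta ->
     (\int[P]_t (\sum_(j < d) (psiF (Z t) theta ord0 j) ^+ 2)%:E < +oo)%E) ->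
  (forall j : 'I_d, ('E_P[fun t => psiF (Z t) theta_star ord0 j] = 0)%E) ->
  (* proxies F_r: measurable functions of X_r with finite first moment *)
  (forall r, r \in Q -> r != fullM M -> forall j : 'I_d,
     measurable_fun setT (fun z => F r z ord0 j)) ->
  (forall r, r \in Q -> r != fullM M -> forall z z' : Zs,
     (forall i, i \in r -> coord i z = coord i z') -> F r z = F r z') ->
  (forall r, r \in Q -> r != fullM M ->
     (\int[P]_t (Num.sqrt (\sum_(j < d) (F r (Z t) ord0 j) ^+ 2))%:E < +oo)%E) ->
  forall j : 'I_d,
    ('E_P[fun t => psi_alpha P Rv Q Z psiF theta_star F alpha t ord0 j] = 0)%E.
Proof.
move=> mZ mR RQ Qne indep fullQ c0 cpi Oth mpsi sqpsi Epsi mF Fcoord intF j.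
set full := fullM M.
set pi := pi_ P Rv.
set lam := lambda_ P Rv Q.
have pi0 r : (0 <= pi r)%R by rewrite fine_ge0.
have piNQ r : r \notin Q -> pi r = 0%R.
  move=> rQ; rewrite /pi /pi_ (_ : [set t | Rv t = r] = set0) ?measure0 //.
  by apply/seteqP; split => // t /= h; move: rQ; rewrite -h RQ.
have pif : (0 < pi full)%R by apply: lt_trans cpi.
have lamE s : lam s = (\sum_(r : {set 'I_M} | s \subset r) pi r)%R.
  rewrite /lam /lambda_ big_mkcondl /=; apply: eq_bigr => r _.
  by case: ifPn => // /piNQ ->.
have lampos s : (0 < lam s)%R.
  rewrite /lam /lambda_ (bigD1 full) /=; last by rewrite fullQ finset.subsetT.
  by rewrite ltr_wpDr // sumr_ge0.
have mpsiZ k : measurable_fun setT (fun x => psiF (Z x) theta_star ord0 k).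
  exact: measurableT_comp (mpsi _ Oth k) mZ.
have igpsi : P.-integrable setT (fun x => (psiF (Z x) theta_star ord0 j)%:E).
  have mS : measurable_fun setT
      (fun x => \sum_(k < d) psiF (Z x) theta_star ord0 k ^+ 2).
    by apply: measurable_sum => k; exact: measurable_funX.
  have iS : P.-integrable setT
      (fun x => (\sum_(k < d) psiF (Z x) theta_star ord0 k ^+ 2)%:E).
    apply/integrableP; split; first exact/measurable_EFinP.
    rewrite (eq_integral (fun x => (\sum_(k < d) psiF (Z x) theta_star ord0 k ^+ 2)%:E)).
      exact: sqpsi.
    by move=> x _; rewrite gee0_abs // lee_fin sumr_ge0 // => k _; exact: sqr_ge0.
  have i1 := @finite_measure_integrable_cst _ _ _ P setT 1%R measurableT.
  have iD := integrableD measurableT i1 iS.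
  apply: (le_integrable measurableT _ _ iD); first exact/measurable_EFinP.
  move=> x _; rewrite /=.
  rewrite lee_fin; apply: absle1.
  by rewrite (bigD1 j) //= lerDl sumr_ge0 // => k _; exact: sqr_ge0.
have igF r : r \in Q -> r != full ->
    P.-integrable setT (fun x => (F r (Z x) ord0 j)%:E).
  move=> rQ rf.
  have mFZ k : measurable_fun setT (fun x => F r (Z x) ord0 k).
    exact: measurableT_comp (mF _ rQ rf k) mZ.
  have mS : measurable_fun setT
      (fun x => Num.sqrt (\sum_(k < d) F r (Z x) ord0 k ^+ 2)).
    apply: measurableT_comp; first exact: (continuous_measurable_fun (@sqrt_continuous R)).
    by apply: measurable_sum => k; exact: measurable_funX.
  have iS : P.-integrable setT
      (fun x => (Num.sqrt (\sum_(k < d) F r (Z x) ord0 k ^+ 2))%:E).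
    apply/integrableP; split; first exact/measurable_EFinP.
    rewrite (eq_integral (fun x => (Num.sqrt (\sum_(k < d) F r (Z x) ord0 k ^+ 2))%:E)).
      exact: intF.
    by move=> x _; rewrite gee0_abs // lee_fin sqrtr_ge0.
  apply: (le_integrable measurableT _ _ iS); first exact/measurable_EFinP.
  move=> x _; rewrite !abse_EFin lee_fin; apply: absle2.
  by rewrite (bigD1 j) //= lerDl sumr_ge0 // => k _; exact: sqr_ge0.
have IP := @int_p _ _ _ _ _ P Z mZ M Rv mR.
have L2' := @L2 _ _ _ _ _ P Z mZ M Rv mR indep.
have iZ (k : R) (h : T -> R) : P.-integrable setT (fun x => (h x)%:E) ->
    P.-integrable setT (fun x => (k * h x)%:E).
  move=> ih; apply: (@eq_integrable _ _ _ P setT measurableT _ _ _ (integrableZl measurableT k ih)).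
  by move=> x _; rewrite EFinM.
have intZ (k : R) (h : T -> R) : P.-integrable setT (fun x => (h x)%:E) ->
    (\int[P]_x (k * h x)%:E = k%:E * \int[P]_x (h x)%:E)%E.
  move=> ih; under eq_integral do rewrite EFinM.
  exact: (integralZl measurableT ih).
pose g0 z := ((pi full)^-1 * psiF z theta_star ord0 j)%R.
pose grs (r s : {set 'I_M}) (z : Zs) := (alpha r * (-1) ^+ (#|s| - #|r|) / lam s * F r z ord0 j)%R.
pose X (r : {set 'I_M}) (x : T) := (\sum_(s : {set 'I_M} | r \subset s) ((s \subset Rv x)%:R * grs r s (Z x))%:E)%E.
have pwE t : (psi_alpha P Rv Q Z psiF theta_star F alpha t ord0 j)%:E =
  (((Rv t == full)%:R * g0 (Z t))%:E +
   (\sum_(r : {set 'I_M}) (if (r \in Q) && (r != full) then X r t else 0%E))%E)%E.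
  rewrite -big_mkcond /= /psi_alpha !mxE summxE EFinD; congr (_ + _)%E.
    by rewrite /g0 /pi mulrA.
  rewrite -sumEFin; apply: eq_bigr => r _; rewrite /X sumEFin; congr (_%:E).
  rewrite mxE /omega_ mulr_sumr big_distrl /=.
  by apply: eq_bigr => s _; rewrite /grs /lam; ring.
have iX r : P.-integrable setT (fun x => if (r \in Q) && (r != full) then X r x else 0%E).
  case: (boolP ((r \in Q) && (r != full))) => [h|_]; last first.
    apply/integrableP; split; first exact: measurable_cst.
    by rewrite (eq_integral (fun=> 0%E)) ?integral0 ?ltry // => x _; rewrite abse0.
  case/andP: h => rQ rf.
  apply: (@integrable_sum _ _ _ P setT measurableT) => s _.
  apply: (IP (fun r0 => s \subset r0) (grs r s)); first by apply: measurable_funM; [exact: measurable_cst|exact: mF].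
  exact/iZ/igF.
have Xr r : r \in Q -> r != full -> (\int[P]_x X r x = 0)%E.
  move=> rQ rf; have fI := integrable_fin_num measurableT (igF r rQ rf).
  rewrite /X integral_sum //; last first.
    move=> s; apply: (IP (fun r0 => s \subset r0) (grs r s)).
      by apply: measurable_funM; [exact: measurable_cst|exact: mF].
    exact/iZ/igF.
  transitivity (\sum_(s : {set 'I_M} | r \subset s)
    ((alpha r * fine (\int[P]_x (F r (Z x) ord0 j)%:E) * (-1) ^+ (#|s| - #|r|))%:E))%E.
    apply: eq_bigr => s rs.
    rewrite (L2' (fun r0 => s \subset r0) (grs r s)); last 2 first.
    - by apply: measurable_funM; [exact: measurable_cst|exact: mF].
    - exact/iZ/igF.
    rewrite (_ : (\sum_(r0 : {set 'I_M} | s \subset r0) fine _)%R = lam s); last by rewrite lamE.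
    rewrite /grs (intZ _ (fun x => F r (Z x) ord0 j) (igF r rQ rf)).
    rewrite -(fineK fI) -!EFinM; congr (_%:E).
    have := lampos s; rewrite lt0r => /andP[l0 _].
    by field.
  rewrite sumEFin -mulr_sumr alt_sum // mulr0 //.
rewrite unlock; under eq_integral => x _ do rewrite pwE.
rewrite integralD //; last 2 first.
- apply: (IP (fun r => r == full) g0).
    by apply: measurable_funM; [exact: measurable_cst|exact: mpsi].
  exact: iZ.
- exact: (@integrable_sum _ _ _ P setT measurableT).
rewrite (L2' (fun r => r == full) g0); last 2 first.
- by apply: measurable_funM; [exact: measurable_cst|exact: mpsi].
- exact: iZ.
rewrite /g0 intZ //.
have hE : (\int[P]_x (psiF (Z x) theta_star ord0 j)%:E = 0)%E.
  by have := Epsi j; rewrite unlock.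
rewrite hE mule0 mule0 add0e integral_sum //.
apply: big1 => r _.
case: (boolP ((r \in Q) && (r != full))) => [/andP[rQ rf]|_].
  exact: Xr.
by rewrite (eq_integral (fun=> 0%E)) ?integral0.
Qed.
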